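(* Let $A\in\mathbb{R}^{m\times n}$, let $k$ be a positive integer, $\epsilon>0$, and let $C$ be the $m\times c$ matrix constructed by sampling $c$ columns of $A$ with the \textsc{SelectColumnsSinglePass} algorithm, using probabilities with $p_i\ge\beta\|A^{(i)}\|_2^2/\|A\|_F^2$ for some positive $\beta\le1$. If $\eta=1+\sqrt{(8/\beta)\log(1/\delta)}$ for any $0<\delta<1$, then, with probability at least $1-\delta$, $$\|A-CC^{+}A\|_F^2\le\|A-A_k\|_F^2+\epsilon\|A\|_F^2,$$ provided $c\ge 4\eta^2k/(\beta\epsilon^2)$.
   Context: \textsc{SelectColumnsSinglePass}: given $A\in\mathbb{R}^{m\times n}$ and an integer $1\le c\le n$, compute probabilities $\{p_i\}_{i=1}^n$ with $p_i\ge\beta\|A^{(i)}\|_2^2/\|A\|_F^2$ (for some positive $\beta\le1$); in $c$ i.i.d. trials pick $i_t\in[n]$ with $\Pr[i_t=\alpha]=p_\alpha$, forming a multiset $S$; return $C=A_S$, the $m\times|S|$ matrix of (unscaled) columns of $A$ with indices in $S$. $A^{(i)}$ is the $i$-th column of $A$, $C^{+}$ the Moore–Penrose pseudoinverse, $A_k$ the best rank-$k$ approximation of $A$. *)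

(* Defs.v *)
From HB Require Import structures.
From mathcomp Require Import all_boot all_order all_algebra.
From mathcomp Require Import boolp classical_sets reals exp.
Set Implicit Arguments. Unset Strict Implicit. Unset Printing Implicit Defensive.
Import Order.TTheory GRing.Theory Num.Theory.
Local Open Scope ring_scope.

Section Defs.
Variable R : realType.

Definition frob2 (m n : nat) (A : 'M[R]_(m, n)) : R :=
  \sum_(i < m) \sum_(j < n) A i j ^+ 2.

Definition colnorm2 (m n : nat) (A : 'M[R]_(m, n)) (j : 'I_n) : R :=
  \sum_(i < m) A i j ^+ 2.

Definition penrose (m c : nat) (C : 'M[R]_(m, c)) (X : 'M[R]_(c, m)) : Prop :=
  [/\ C *m X *m C = C, X *m C *m X = X,
      (C *m X)^T = C *m X & (X *m C)^T = X *m C].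

(* Moore--Penrose pseudoinverse C^+ (it exists and is unique) *)
Definition mpinv (m c : nat) (C : 'M[R]_(m, c)) : 'M[R]_(c, m) :=
  xget 0 [set X | penrose C X].

Definition best_rank_approx (m n k : nat) (A Ak : 'M[R]_(m, n)) : Prop :=
  (\rank Ak <= k)%N /\
  forall B : 'M[R]_(m, n), (\rank B <= k)%N -> frob2 (A - Ak) <= frob2 (A - B).

(* the matrix A_S of the (unscaled) sampled columns, S given as i_1..i_c *)
Definition sampled_cols (m n c : nat) (A : 'M[R]_(m, n))
  (S : {ffun 'I_c -> 'I_n}) : 'M[R]_(m, c) :=
  \matrix_(i < m, t < c) A i (S t).

(* probability of an event under c i.i.d. trials with distribution p on [n] *)
Definition iid_prob (n c : nat) (p : 'I_n -> R)
  (E : {ffun 'I_c -> 'I_n} -> bool) : R :=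
  \sum_(S : {ffun 'I_c -> 'I_n} | E S) \prod_(t < c) p (S t).

End Defs.

(* Main.v *)
Require Import Defs.
From HB Require Import structures.
From mathcomp Require Import all_boot all_order all_algebra.
From mathcomp Require Import boolp classical_sets reals exp.
From mathcomp Require Import sequences.
From mathcomp Require Import ring lra.
Set Implicit Arguments. Unset Strict Implicit. Unset Printing Implicit Defensive.
Import Order.TTheory GRing.Theory Num.Theory.
Local Open Scope ring_scope.

Section LA.
Variable R : realType.

Definition ip (a b : nat) (X Y : 'M[R]_(a, b)) : R :=
  \sum_(i < a) \sum_(j < b) X i j * Y i j.

Definition nrm (a b : nat) (X : 'M[R]_(a, b)) : R := Num.sqrt (frob2 X).

Lemma frob2E a b (X : 'M[R]_(a, b)) : frob2 X = ip X X.
Proof. by apply: eq_bigr => i _; apply: eq_bigr => j _; rewrite expr2. Qed.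

Lemma ipC a b (X Y : 'M[R]_(a, b)) : ip X Y = ip Y X.
Proof. by apply: eq_bigr => i _; apply: eq_bigr => j _; rewrite mulrC. Qed.

Lemma ipDl a b (X Y Z : 'M[R]_(a, b)) : ip (X + Y) Z = ip X Z + ip Y Z.
Proof.
rewrite /ip -big_split; apply: eq_bigr => i _; rewrite -big_split.
by apply: eq_bigr => j _; rewrite mxE mulrDl.
Qed.

Lemma ipZl a b x (X Z : 'M[R]_(a, b)) : ip (x *: X) Z = x * ip X Z.
Proof.
rewrite /ip mulr_sumr; apply: eq_bigr => i _; rewrite mulr_sumr.
by apply: eq_bigr => j _; rewrite mxE mulrA.
Qed.

Lemma ipNl a b (X Z : 'M[R]_(a, b)) : ip (- X) Z = - ip X Z.
Proof. by rewrite -scaleN1r ipZl mulN1r. Qed.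

Lemma ipBl a b (X Y Z : 'M[R]_(a, b)) : ip (X - Y) Z = ip X Z - ip Y Z.
Proof. by rewrite ipDl ipNl. Qed.

Lemma ipDr a b (X Y Z : 'M[R]_(a, b)) : ip Z (X + Y) = ip Z X + ip Z Y.
Proof. by rewrite ipC ipDl !(ipC Z). Qed.
Lemma ipZr a b x (X Z : 'M[R]_(a, b)) : ip Z (x *: X) = x * ip Z X.
Proof. by rewrite ipC ipZl ipC. Qed.
Lemma ipBr a b (X Y Z : 'M[R]_(a, b)) : ip Z (X - Y) = ip Z X - ip Z Y.
Proof. by rewrite ipC ipBl !(ipC Z). Qed.

Lemma ip_suml a b I (r : seq I) (P : pred I) (F : I -> 'M[R]_(a, b)) Z :
  ip (\sum_(i <- r | P i) F i) Z = \sum_(i <- r | P i) ip (F i) Z.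
Proof.
elim/big_rec2: _ => [|i y M _ <-]; last by rewrite ipDl.
by rewrite /ip big1 // => x _; rewrite big1 // => y _; rewrite mxE mul0r.
Qed.

Lemma ip_sumr a b I (r : seq I) (P : pred I) (F : I -> 'M[R]_(a, b)) Z :
  ip Z (\sum_(i <- r | P i) F i) = \sum_(i <- r | P i) ip Z (F i).
Proof. by rewrite ipC ip_suml; apply: eq_bigr => i _; rewrite ipC. Qed.

Lemma ip_tr a b (X Y : 'M[R]_(a, b)) : ip X Y = \tr (X *m Y^T).
Proof.
rewrite /ip /mxtrace; apply: eq_bigr => i _; rewrite mxE.
by apply: eq_bigr => j _; rewrite mxE.
Qed.

Lemma frob2_tr a b (X : 'M[R]_(a, b)) : frob2 X = \tr (X *m X^T).
Proof. by rewrite frob2E ip_tr. Qed.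

Lemma frob2_ge0 a b (X : 'M[R]_(a, b)) : 0 <= frob2 X.
Proof. by apply: sumr_ge0 => i _; apply: sumr_ge0 => j _; apply: sqr_ge0. Qed.

Lemma frob2_eq0 a b (X : 'M[R]_(a, b)) : frob2 X = 0 -> X = 0.
Proof.
move=> /eqP; rewrite psumr_eq0; last by move=> i _; apply: sumr_ge0 => j _; apply: sqr_ge0.
move=> /allP H; apply/matrixP => i j; rewrite mxE.
have := H i (mem_index_enum _); rewrite implyTb psumr_eq0; last by move=> *; apply: sqr_ge0.
by move=> /allP /(_ j (mem_index_enum _)); rewrite implyTb sqrf_eq0 => /eqP.
Qed.

Lemma ip_le_sq a b (X Y : 'M[R]_(a, b)) : ip X Y ^+ 2 <= frob2 X * frob2 Y.
Proof.
set e := ip X Y; set u := frob2 X; set v := frob2 Y.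
have u0 : 0 <= u by apply: frob2_ge0.
have v0 : 0 <= v by apply: frob2_ge0.
have [|vn0] := eqVneq v 0.
  move=> v0'.
  have Y0 : Y = 0 by apply: frob2_eq0.
  have -> : e = 0.
    by rewrite /e Y0 /ip big1 // => i _; rewrite big1 // => j _; rewrite mxE mulr0.
  by rewrite expr0n /=; apply: mulr_ge0.
have vp : 0 < v by rewrite lt_def vn0 v0.
have H : 0 <= frob2 (v *: X - e *: Y) by apply: frob2_ge0.
rewrite frob2E !(ipBl, ipBr, ipZl, ipZr) -!frob2E -/u -/v (ipC Y X) -/e in H.
have : 0 <= v * (u * v - e ^+ 2) by lra.
by rewrite pmulr_rge0 // subr_ge0.
Qed.

Lemma nrm_ge0 a b (X : 'M[R]_(a, b)) : 0 <= nrm X.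
Proof. exact: sqrtr_ge0. Qed.

Lemma nrm_sq a b (X : 'M[R]_(a, b)) : nrm X ^+ 2 = frob2 X.
Proof. by rewrite sqr_sqrtr // frob2_ge0. Qed.

Lemma ip_le a b (X Y : 'M[R]_(a, b)) : ip X Y <= nrm X * nrm Y.
Proof.
have h := ip_le_sq X Y.
rewrite -(nrm_sq X) -(nrm_sq Y) -exprMn in h.
have := nrm_ge0 X; have := nrm_ge0 Y => hx hy.
have hp : 0 <= nrm X * nrm Y by apply: mulr_ge0.
case: (lerP (ip X Y) 0) => [h0|h0]; first by apply: le_trans h0 hp.
by rewrite -(ler_pXn2r (_ : (0 < 2)%N)) // ?nnegrE ?ltW.
Qed.

Lemma nrm_triangle a b (X Y : 'M[R]_(a, b)) : nrm (X + Y) <= nrm X + nrm Y.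
Proof.
have hx := nrm_ge0 X; have hy := nrm_ge0 Y; have hxy := nrm_ge0 (X + Y).
rewrite -(ler_pXn2r (_ : (0 < 2)%N)) ?nnegrE ?addr_ge0 //.
rewrite nrm_sq frob2E ipDl !ipDr -!frob2E -!nrm_sq (ipC Y X).
have := ip_le X Y; nra.
Qed.

Lemma nrmN a b (X : 'M[R]_(a, b)) : nrm (- X) = nrm X.
Proof. by rewrite /nrm !frob2E ipNl ipC ipNl opprK. Qed.

Lemma nrm_diff a b (X Y : 'M[R]_(a, b)) : `|nrm X - nrm Y| <= nrm (X - Y).
Proof.
have h1 := nrm_triangle (X - Y) Y; have h2 := nrm_triangle (Y - X) X.
rewrite subrK in h1; rewrite subrK in h2.
rewrite -opprB nrmN in h2.
rewrite ler_norml; apply/andP; split; lra.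
Qed.

End LA.

Section Proj.
Variable R : realType.

Lemma mxtraceB n (A B : 'M[R]_n) : \tr (A - B) = \tr A - \tr B.
Proof. exact: raddfB. Qed.

Definition proj (m : nat) (P : 'M[R]_m) := P *m P = P /\ P^T = P.

Lemma penrose_proj m c (C : 'M[R]_(m, c)) X : penrose C X ->
  proj (C *m X) /\ C *m X *m C = C.
Proof.
case=> h1 h2 h3 h4; split => //; split => //.
by rewrite mulmxA h1.
Qed.

Lemma proj_compl m (P : 'M[R]_m) : proj P -> proj (1%:M - P).
Proof.
case=> h1 h2; split.
  by rewrite mulmxBl !mulmxBr !mul1mx !mulmx1 h1 subrr subr0.
by rewrite linearB /= trmx1 h2.
Qed.

Lemma frob2_projB m b (P : 'M[R]_m) (B : 'M[R]_(m, b)) : proj P ->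
  frob2 (B - P *m B) = frob2 B - \tr (P *m (B *m B^T)).
Proof.
case=> h1 h2; rewrite !frob2_tr.
rewrite linearB /= trmx_mul h2 mulmxBl !mulmxBr !mxtraceB.
have e1 : \tr (B^T *m P *m B) = \tr (P *m B *m B^T).
  by rewrite mxtrace_mulC !mulmxA mxtrace_mulC !mulmxA.
have e2 : \tr (B *m B^T *m P) = \tr (P *m B *m B^T).
  by rewrite mxtrace_mulC !mulmxA.
have e3 : \tr (P *m B *m (B^T *m P)) = \tr (P *m B *m B^T).
  by rewrite -!mulmxA mxtrace_mulC -!mulmxA h1 !mulmxA e2.
by rewrite e3 !mulmxA e2 subrr subr0.
Qed.

Lemma frob2_projM m b (P : 'M[R]_m) (B : 'M[R]_(m, b)) : proj P ->
  frob2 (P *m B) = \tr (P *m (B *m B^T)).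
Proof.
case=> h1 h2; rewrite frob2_tr trmx_mul h2 !mulmxA.
by rewrite mxtrace_mulC !mulmxA h1 -!mulmxA.
Qed.

Lemma frob2_proj_le m b (P : 'M[R]_m) (B : 'M[R]_(m, b)) : proj P ->
  frob2 (P *m B) <= frob2 B.
Proof.
move=> hP; have := frob2_ge0 (B - P *m B).
by rewrite frob2_projB // frob2_projM // subr_ge0.
Qed.

Lemma gram_unit m r (F : 'M[R]_(m, r)) : row_free F^T -> F^T *m F \in unitmx.
Proof.
move=> hF; rewrite -row_free_unit -kermx_eq0; apply/eqP/row_matrixP => i.
set v := row i _.
have hv : v *m (F^T *m F) = 0 by rewrite /v -row_mul mulmx_ker row0.
have hw : (v *m F^T) *m (v *m F^T)^T = 0.
  by rewrite trmx_mul trmxK mulmxA -(mulmxA v) hv mul0mx.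
have : v *m F^T = 0.
  apply: frob2_eq0; rewrite frob2_tr hw /mxtrace big1 // => j _; by rewrite mxE.
by move/eqP; rewrite mulmx_free_eq0 // => /eqP ->; rewrite row0.
Qed.

Lemma pinv_FG m r c (F : 'M[R]_(m, r)) (G : 'M[R]_(r, c)) :
  F^T *m F \in unitmx -> G *m G^T \in unitmx ->
  exists X, penrose (F *m G) X /\ \tr ((F *m G) *m X) = r%:R.
Proof.
move=> uF uG.
set X := G^T *m invmx (G *m G^T) *m invmx (F^T *m F) *m F^T.
have hCX : F *m G *m X = F *m invmx (F^T *m F) *m F^T.
  rewrite /X !mulmxA -(mulmxA F G) -(mulmxA F (G *m G^T)) mulmxV //.
  by rewrite mulmx1.
have hXC : X *m (F *m G) = G^T *m invmx (G *m G^T) *m G.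
  rewrite /X !mulmxA -(mulmxA _ F^T F) -(mulmxA _ (invmx (F^T *m F))) mulVmx // mulmx1.
  done.
exists X; split; last first.
  by rewrite hCX mxtrace_mulC mulmxA mulmxV // mxtrace1.
split.
- by rewrite hCX -!mulmxA (mulmxA F^T) (mulmxA (invmx _)) mulVmx // mul1mx.
- rewrite -mulmxA hCX /X -!mulmxA; congr (_ *m _); congr (_ *m _).
  by rewrite (mulmxA F^T F) (mulmxA (F^T *m F)) mulmxV // mul1mx.
- rewrite hCX !trmx_mul trmxK -mulmxA trmx_inv trmx_mul trmxK mulmxA.
  done.
- rewrite hXC !trmx_mul trmxK -mulmxA trmx_inv trmx_mul trmxK mulmxA.
  done.
Qed.

Lemma pinv_exists m c (C : 'M[R]_(m, c)) :
  exists X, penrose C X /\ \tr (C *m X) = (\rank C)%:R.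
Proof.
have uF : (col_base C)^T *m col_base C \in unitmx.
  apply: gram_unit; rewrite /row_free mxrank_tr; exact: col_base_full.
have uG : row_base C *m (row_base C)^T \in unitmx.
  by have := @gram_unit _ _ (row_base C)^T; rewrite trmxK; apply; apply: row_base_free.
by have := pinv_FG uF uG; rewrite mulmx_base.
Qed.

Lemma penrose_CX_uniq m c (C : 'M[R]_(m, c)) X Y :
  penrose C X -> penrose C Y -> C *m X = C *m Y.
Proof.
case=> x1 x2 x3 x4 [y1 y2 y3 y4].
have e1 : C *m X = (C *m Y) *m (C *m X) by rewrite mulmxA y1.
rewrite e1 -{1}y3 -x3 -trmx_mul.
by rewrite mulmxA x1 y3.
Qed.

End Proj.

Section MP.
Variable R : realType.

Lemma mpinvP m c (C : 'M[R]_(m, c)) : penrose C (mpinv C).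
Proof.
rewrite /mpinv; apply: (@xgetPex _ 0 [set X | penrose C X]).
by have [X [hX _]] := pinv_exists C; exists X.
Qed.

Lemma mpinv_tr m c (C : 'M[R]_(m, c)) : \tr (C *m mpinv C) = (\rank C)%:R.
Proof.
have [X [hX hT]] := pinv_exists C.
by rewrite (penrose_CX_uniq (mpinvP C) hX).
Qed.
End MP.

Section Det.
Variable R : realType.

Lemma det_bound m n c k (A Ak : 'M[R]_(m, n)) (C : 'M[R]_(m, c)) (D : 'M[R]_(c, c)) :
  (\rank Ak <= k)%N ->
  frob2 (A - C *m mpinv C *m A) <=
  frob2 (A - Ak) + Num.sqrt (2 * k%:R) * nrm (A *m A^T - (C *m D) *m (C *m D)^T).
Proof.
move=> hk.
have [hPc hPcC] := penrose_proj (mpinvP C).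
set Pc := C *m mpinv C in hPc hPcC *.
have [hP hPAk] := penrose_proj (mpinvP Ak).
set P := Ak *m mpinv Ak in hP hPAk *.
set M := Pc *m P.
have [hQ hQM] := penrose_proj (mpinvP M).
set Q := M *m mpinv M in hQ hQM *.
set Y := C *m D.
have hY : Pc *m Y = Y by rewrite /Y mulmxA hPcC.
have hPcQ : Pc *m Q = Q by rewrite /Q /M (mulmxA Pc (Pc *m P)) (mulmxA Pc Pc) hPc.1.
have hQPc : Q *m Pc = Q.
  by rewrite -{1}hQ.2 -{1}hPc.2 -trmx_mul hPcQ hQ.2.
have hMt : P *m Pc *m Q = P *m Pc.
  have := congr1 trmx hQM; rewrite trmx_mul /M trmx_mul hP.2 hPc.2 hQ.2.
  by rewrite mulmxA.
set W := A *m A^T.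
set G := Y *m Y^T.
have s1 : frob2 (A - Pc *m A) = frob2 A - \tr (Pc *m W) by apply: frob2_projB.
have s2 : frob2 A - \tr (P *m W) <= frob2 (A - Ak).
  rewrite -frob2_projB //.
  have -> : A - P *m A = (1%:M - P) *m (A - Ak).
    by rewrite mulmxBl mulmxBr !mul1mx mulmxBr hPAk opprB addrA subrK.
  by apply: frob2_proj_le; apply: proj_compl.
have s3 : \tr (Q *m W) <= \tr (Pc *m W).
  have hpq : proj (Pc - Q).
    split; last by rewrite linearB /= hPc.2 hQ.2.
    by rewrite mulmxBl !mulmxBr hPc.1 hPcQ hQPc hQ.1 subrr subr0.
  rewrite -subr_ge0 -mxtraceB -mulmxBl -frob2_projM //; exact: frob2_ge0.
have s4 : \tr (P *m G) <= \tr (Q *m G).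
  rewrite -frob2_projM // -frob2_projM //.
  have -> : P *m Y = P *m (Pc *m (Q *m Y)).
    by rewrite (mulmxA Pc Q) (mulmxA P (Pc *m Q)) (mulmxA P Pc Q) hMt -mulmxA hY.
  apply: le_trans (frob2_proj_le _ hP) _.
  exact: frob2_proj_le _ hPc.
have s5 : \tr (P *m W) - \tr (Q *m W) <= nrm (P - Q) * nrm (W - G).
  apply: le_trans (ip_le (P - Q) (W - G)).
  have hWG : (W - G)^T = W - G by rewrite linearB /= /W /G !trmx_mul !trmxK.
  rewrite ip_tr hWG mulmxBl !mulmxBr !mxtraceB.
  lra.
have s6 : nrm (P - Q) <= Num.sqrt (2 * k%:R).
  rewrite /nrm ler_sqrt; last by apply: mulr_ge0 => //; apply: ler0n.
  rewrite frob2_tr linearB /= hP.2 hQ.2.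
  rewrite mulmxBl !mulmxBr hP.1 hQ.1 !mxtraceB (mxtrace_mulC Q P).
  have tPQ : 0 <= \tr (P *m Q).
    have := frob2_ge0 (P *m Q); rewrite frob2_projM // hQ.2 hQ.1 //.
  have tP : \tr P <= k%:R.
    by rewrite /P mpinv_tr ler_nat.
  have tQ : \tr Q <= k%:R.
    rewrite /Q mpinv_tr ler_nat; apply: leq_trans hk.
    apply: leq_trans (mxrankM_maxr _ _) _.
    exact: mxrankM_maxl.
  lra.
have hnW := nrm_ge0 (W - G).
have := ler_wpM2r hnW s6.
lra.
Qed.

End Det.

Section ExpBound.
Variable R : realType.

Lemma expR_quad (x : R) : `|x| <= 1/2 -> expR x <= 1 + x + x ^+ 2.
Proof.
move=> hx; have [x0|x0] := lerP 0 x.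
  have hx2 : x <= 1/2 by move: hx; rewrite ger0_norm.
  set e := expR (x / 4).
  have he : 0 < e by apply: expR_gt0.
  have hx4 : expR x = e ^+ 4 by rewrite /e -expRM_natr; congr expR; field.
  set y := 1 - x / 4.
  have hy : y <= e^-1 by rewrite /e -expRN /y; apply: expR_ge1Dx.
  have hy0 : 0 < y by rewrite /y; lra.
  have hey : e * y <= 1.
    by rewrite -(mulfV (lt0r_neq0 he)); apply: ler_wpM2l; [apply: ltW|].
  have hey4 : (e * y) ^+ 4 <= 1.
    by apply: exprn_ile1 => //; apply: mulr_ge0; apply: ltW.
  have hq : 1 <= (1 + x + x ^+ 2) * y ^+ 4.
    rewrite /y.
    have h2 : x ^+ 2 <= 1/4 by nra.
    have h3 : x ^+ 3 <= 1/8 by rewrite exprS; nra.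
    have h4 : 0 <= x ^+ 4 by apply: exprn_ge0.
    have h5 : 0 <= x ^+ 5 by apply: exprn_ge0.
    have h6 : 0 <= x ^+ 6 by apply: exprn_ge0.
    have e5 : x ^+ 5 = x ^+ 2 * x ^+ 3 by rewrite -exprD.
    have hq : 0 <= x ^+ 2 * (3/8 - 11/16 * x - 15/256 * x ^+ 3) by apply: mulr_ge0; [apply: sqr_ge0| lra].
    have -> : (1 + x + x ^+ 2) * (1 - x / 4) ^+ 4 =
       1 + x ^+ 2 * (3/8 - 11/16 * x - 15/256 * x ^+ 3) + 81/256 * x ^+ 4 + 1/256 * x ^+ 6.
      by field.
    lra.
  rewrite hx4.
  have : e ^+ 4 * ((1 + x + x ^+ 2) * y ^+ 4) <= 1 + x + x ^+ 2.
    rewrite mulrCA -exprMn.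
    have hp : 0 <= 1 + x + x ^+ 2 by nra.
    by rewrite -[X in _ <= X]mulr1 ler_wpM2l.
  have he4 : 0 <= e ^+ 4 by apply: exprn_ge0; apply: ltW.
  nra.
set y := - x.
have hy : 0 < y by rewrite /y; lra.
have hy2 : y <= 1/2 by move: hx; rewrite ltr0_norm.
have hex : expR x = (expR y)^-1 by rewrite /y expRN invrK.
have e2 : (1 + y / 2) ^+ 2 <= expR y.
  have -> : expR y = expR (y / 2) ^+ 2 by rewrite -expRM_natr; congr expR; field.
  apply: lerXn2r; rewrite ?nnegrE; first lra.
    by apply: expR_ge0.
  by apply: expR_ge1Dx.
have hp : 0 < 1 + x + x ^+ 2 by nra.
rewrite hex -div1r ler_pdivrMr ?expR_gt0 //.
have -> : x = - y by rewrite /y opprK.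
have hp' : 0 < 1 - y + y ^+ 2 by nra.
have := ler_wpM2l (ltW hp') e2.
nra.
Qed.

End ExpBound.

Section Expect.
Variable R : realType.
Variable n : nat.
Variable p : 'I_n -> R.

Definition Ex c (h : {ffun 'I_c -> 'I_n} -> R) : R :=
  \sum_(S : {ffun 'I_c -> 'I_n}) (\prod_(t < c) p (S t)) * h S.
Arguments Ex : clear implicits.

Definition fcons c (i : 'I_n) (S : {ffun 'I_c -> 'I_n}) : {ffun 'I_c.+1 -> 'I_n} :=
  [ffun t => if unlift ord0 t is Some t' then S t' else i].
Definition ftail c (S : {ffun 'I_c.+1 -> 'I_n}) : {ffun 'I_c -> 'I_n} :=
  [ffun t => S (lift ord0 t)].
Definition fupd c (S : {ffun 'I_c -> 'I_n}) (t : 'I_c) (i : 'I_n) : {ffun 'I_c -> 'I_n} :=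
  [ffun u => if u == t then i else S u].

Lemma fcons0 c i (S : {ffun 'I_c -> 'I_n}) : fcons i S ord0 = i.
Proof. by rewrite ffunE unlift_none. Qed.

Lemma fconsS c i (S : {ffun 'I_c -> 'I_n}) t : fcons i S (lift ord0 t) = S t.
Proof. by rewrite ffunE liftK. Qed.

Lemma fconsK c (S : {ffun 'I_c.+1 -> 'I_n}) : fcons (S ord0) (ftail S) = S.
Proof.
apply/ffunP => t; case: (unliftP ord0 t) => [t' ->|->].
  by rewrite fconsS ffunE.
by rewrite fcons0.
Qed.

Lemma ftail_cons c i (S : {ffun 'I_c -> 'I_n}) : ftail (fcons i S) = S.
Proof. by apply/ffunP => t; rewrite ffunE fconsS. Qed.

Lemma fcons_upd c i (S : {ffun 'I_c -> 'I_n}) t j :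
  fcons i (fupd S t j) = fupd (fcons i S) (lift ord0 t) j.
Proof.
apply/ffunP => u; case: (unliftP ord0 u) => [u' ->|->].
  by rewrite fconsS !ffunE liftK (inj_eq (@lift_inj _ ord0)).
by rewrite fcons0 ffunE fcons0 (negbTE (neq_lift _ _)).
Qed.

Lemma fcons_upd0 c i j (S : {ffun 'I_c -> 'I_n}) :
  fcons j S = fupd (fcons i S) ord0 j.
Proof.
apply/ffunP => u; case: (unliftP ord0 u) => [u' ->|->].
  by rewrite fconsS ffunE fconsS eq_sym (negbTE (neq_lift _ _)).
by rewrite !ffunE unlift_none eqxx.
Qed.

Lemma sum_ffunS c (F : {ffun 'I_c.+1 -> 'I_n} -> R) :
  \sum_S F S = \sum_(i < n) \sum_(S : {ffun 'I_c -> 'I_n}) F (fcons i S).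
Proof.
rewrite pair_big /=.
rewrite (reindex (fun x : 'I_n * {ffun 'I_c -> 'I_n} => fcons x.1 x.2)) //=.
exists (fun S : {ffun 'I_c.+1 -> 'I_n} => (S ord0, ftail S)) => [[i S] _|S _] /=.
  by rewrite fcons0 ftail_cons.
exact: fconsK.
Qed.

Lemma Ex_S c h : Ex c.+1 h = \sum_(i < n) p i * Ex c (fun S => h (fcons i S)).
Proof.
rewrite /Ex sum_ffunS; apply: eq_bigr => i _; rewrite mulr_sumr.
apply: eq_bigr => S _; rewrite big_ord_recl fcons0 -!mulrA; congr (_ * _).
by congr (_ * _); apply: eq_bigr => t _; rewrite fconsS.
Qed.

Lemma Ex_0 h (S : {ffun 'I_0 -> 'I_n}) : Ex 0 h = h S.
Proof.
have e : forall S' : {ffun 'I_0 -> 'I_n}, S' = S by move=> S'; apply/ffunP => [[]].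
rewrite /Ex (big_pred1 S) ?big_ord0 ?mul1r // => S'.
by rewrite /= (e S') eqxx.
Qed.

Lemma Ex_ext c h1 h2 : (forall S, h1 S = h2 S) -> Ex c h1 = Ex c h2.
Proof. by move=> e; apply: eq_bigr => S _; rewrite e. Qed.

Lemma Ex_add c h1 h2 : Ex c (fun S => h1 S + h2 S) = Ex c h1 + Ex c h2.
Proof. by rewrite /Ex -big_split; apply: eq_bigr => S _; rewrite mulrDr. Qed.

Lemma Ex_scale c a h : Ex c (fun S => a * h S) = a * Ex c h.
Proof. by rewrite /Ex mulr_sumr; apply: eq_bigr => S _; rewrite mulrCA. Qed.

Lemma Ex_opp c h : Ex c (fun S => - h S) = - Ex c h.
Proof. by rewrite -mulN1r -Ex_scale; apply: Ex_ext => S; rewrite mulN1r. Qed.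

Lemma Ex_sub c h1 h2 : Ex c (fun S => h1 S - h2 S) = Ex c h1 - Ex c h2.
Proof. by rewrite Ex_add Ex_opp. Qed.

Section Pos.
Variable p0 : forall i, 0 <= p i.
Variable p1 : \sum_(i < n) p i = 1.

Lemma w_ge0 c (S : {ffun 'I_c -> 'I_n}) : 0 <= \prod_(t < c) p (S t).
Proof. by apply: prodr_ge0 => t _. Qed.

Lemma Ex_const c x : Ex c (fun _ => x) = x.
Proof.
rewrite /Ex -big_distrl /= -(bigA_distr_bigA (fun (t : 'I_c) (j : 'I_n) => p j)) /=.
by rewrite big1 ?mul1r // => t _; rewrite p1.
Qed.

Lemma Ex_le c h1 h2 : (forall S, h1 S <= h2 S) -> Ex c h1 <= Ex c h2.
Proof. by move=> H; apply: ler_sum => S _; apply: ler_wpM2l; [apply: w_ge0|]. Qed.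

Lemma Ex_ge0 c h : (forall S, 0 <= h S) -> 0 <= Ex c h.
Proof. by move=> H; rewrite -(Ex_const c 0); apply: Ex_le. Qed.

Lemma Ex_norm c h : `|Ex c h| <= Ex c (fun S => `|h S|).
Proof.
apply: le_trans (ler_norm_sum _ _ _) _; apply: ler_sum => S _.
by rewrite normrM ger0_norm // w_ge0.
Qed.

Lemma sum_p_norm (g : 'I_n -> R) d : (forall i, `|g i| <= d) ->
  `|\sum_(i < n) p i * g i| <= d.
Proof.
move=> H; apply: le_trans (ler_norm_sum _ _ _) _.
rewrite -[d]mul1r -p1 mulr_suml; apply: ler_sum => i _.
by rewrite normrM ger0_norm // ler_wpM2l.
Qed.

Lemma bd_ineq s d : 0 <= s -> 0 <= d -> s * d <= 1/2 ->
  forall c (f : {ffun 'I_c -> 'I_n} -> R),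
  (forall S t i, `|f S - f (fupd S t i)| <= d) ->
  (forall S, `|f S - Ex c f| <= c%:R * d) /\
  Ex c (fun S => expR (s * (f S - Ex c f))) <= expR (c%:R * (s ^+ 2 * d ^+ 2)).
Proof.
move=> s0 d0 sd; elim=> [|c IH] f hf.
  split=> [S|]; first by rewrite (Ex_0 f S) subrr normr0 mul0r.
  rewrite mul0r expR0 -[leRHS](Ex_const 0 1); apply: Ex_le => S.
  by rewrite (Ex_0 f S) subrr mulr0 expR0.
pose fi (i : 'I_n) (S : {ffun 'I_c -> 'I_n}) := f (fcons i S).
have hfi i : forall S t j, `|fi i S - fi i (fupd S t j)| <= d.
  by move=> S t j; rewrite /fi fcons_upd; apply: hf.
pose g i := Ex c (fi i).
have hEf : Ex c.+1 f = \sum_(i < n) p i * g i by rewrite Ex_S.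
have hg i j : `|g i - g j| <= d.
  rewrite /g -Ex_sub; apply: (le_trans (@Ex_norm c _)).
  rewrite -[leRHS](Ex_const c d); apply: Ex_le => S.
  by rewrite /fi (fcons_upd0 i j S); apply: hf.
have hgE i : `|g i - Ex c.+1 f| <= d.
  have -> : g i - Ex c.+1 f = \sum_(j < n) p j * (g i - g j).
    rewrite hEf; apply/esym; under eq_bigr do rewrite mulrBr.
    by rewrite sumrB -mulr_suml p1 mul1r.
  by apply: sum_p_norm => j; apply: hg.
split=> [S|].
  rewrite -(fconsK S).
  have [h1 _] := IH (fi (S ord0)) (hfi (S ord0)).
  have := h1 (ftail S); rewrite -/(g (S ord0)) /fi => h2.
  have h3 := hgE (S ord0).
  have := ler_normD (f (fcons (S ord0) (ftail S)) - g (S ord0)) (g (S ord0) - Ex c.+1 f).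
  rewrite addrA subrK => h4.
  have hc : (c.+1)%:R * d = c%:R * d + d by rewrite -addn1 natrD mulrDl mul1r.
  by apply: le_trans h4 _; rewrite hc; apply: lerD.
set Ef := Ex c.+1 f.
rewrite Ex_S.
have step i : Ex c (fun S => expR (s * (f (fcons i S) - Ef))) =
    expR (s * (g i - Ef)) * Ex c (fun S => expR (s * (fi i S - g i))).
  rewrite -Ex_scale; apply: Ex_ext => S; rewrite -expRD /fi; congr expR; ring.
under eq_bigr do rewrite step.
have hb i : Ex c (fun S => expR (s * (fi i S - g i))) <= expR (c%:R * (s ^+ 2 * d ^+ 2)).
  by have [_ h] := IH (fi i) (hfi i).
set K := expR (c%:R * (s ^+ 2 * d ^+ 2)).
have K0 : 0 <= K by apply: expR_ge0.
apply: (@le_trans _ _ (\sum_(i < n) p i * (K * (1 + s * (g i - Ef) + (s * (g i - Ef)) ^+ 2)))).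
  apply: ler_sum => i _; apply: ler_wpM2l => //.
  rewrite mulrC; apply: ler_pM.
    by apply: Ex_ge0 => S; apply: expR_ge0.
    exact: expR_ge0.
    exact: hb.
  apply: expR_quad; rewrite normrM ger0_norm //.
  apply: le_trans sd; apply: ler_wpM2l => //; exact: hgE.
have hsum1 : \sum_(i < n) p i * (s * (g i - Ef)) = 0.
  under eq_bigr do rewrite mulrCA mulrBr.
  by rewrite -mulr_sumr sumrB -mulr_suml p1 mul1r -hEf /Ef subrr mulr0.
have hsum2 : \sum_(i < n) p i * (s * (g i - Ef)) ^+ 2 <= s ^+ 2 * d ^+ 2.
  rewrite -[leRHS]mul1r -p1 mulr_suml; apply: ler_sum => i _.
  apply: ler_wpM2l => //; rewrite exprMn; apply: ler_wpM2l; first exact: sqr_ge0.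
  rewrite -real_normK ?num_real //; apply: lerXn2r; rewrite ?nnegrE //; exact: hgE.
have -> : \sum_(i < n) p i * (K * (1 + s * (g i - Ef) + (s * (g i - Ef)) ^+ 2)) =
   K * (\sum_(i < n) p i + \sum_(i < n) p i * (s * (g i - Ef)) + \sum_(i < n) p i * (s * (g i - Ef)) ^+ 2).
  rewrite -!big_split mulr_sumr; apply: eq_bigr => i _ /=; ring.
have hc : (c.+1)%:R * (s ^+ 2 * d ^+ 2) = c%:R * (s ^+ 2 * d ^+ 2) + s ^+ 2 * d ^+ 2.
  by rewrite -addn1 natrD mulrDl mul1r.
rewrite p1 hsum1 addr0 hc expRD.
apply: ler_wpM2l => //; apply: le_trans (expR_ge1Dx _).
by rewrite lerD2l.
Qed.

End Pos.
End Expect.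
Arguments Ex {R n} p c h.

Section Moment.
Variable R : realType.
Variable n : nat.
Variable p : 'I_n -> R.
Variable p0 : forall i, 0 <= p i.
Variable p1 : \sum_(i < n) p i = 1.
Variables (a b : nat) (X : 'I_n -> 'M[R]_(a, b)).
Variable X0 : \sum_(i < n) p i *: X i = 0.

Lemma sum_fcons c i (S : {ffun 'I_c -> 'I_n}) :
  \sum_(t < c.+1) X (fcons i S t) = X i + \sum_(t < c) X (S t).
Proof.
by rewrite big_ord_recl fcons0; congr (_ + _); apply: eq_bigr => t _; rewrite fconsS.
Qed.

Lemma Ex_ip c B : Ex p c (fun S => ip B (\sum_(t < c) X (S t))) = 0.
Proof.
elim: c => [|c IH].
  rewrite -[RHS](Ex_const p1 0); apply: Ex_ext => S.
  by rewrite big_ord0 /ip big1 // => i _; rewrite big1 // => j _; rewrite mxE mulr0.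
rewrite Ex_S.
have -> : \sum_(i < n) p i * Ex p c (fun S => ip B (\sum_(t < c.+1) X (fcons i S t))) =
          \sum_(i < n) p i * ip B (X i).
  apply: eq_bigr => i _; congr (_ * _).
  under Ex_ext do rewrite sum_fcons ipDr.
  by rewrite Ex_add IH addr0 Ex_const.
have := congr1 (ip B) X0; rewrite ip_sumr.
under eq_bigr do rewrite ipZr.
move=> ->; rewrite /ip big1 // => i _; rewrite big1 // => j _; rewrite mxE mulr0 //.
Qed.

Lemma Ex_frob2 c : Ex p c (fun S => frob2 (\sum_(t < c) X (S t))) =
  c%:R * \sum_(i < n) p i * frob2 (X i).
Proof.
elim: c => [|c IH].
  rewrite mul0r -[RHS](Ex_const p1 0); apply: Ex_ext => S.
  by rewrite big_ord0 /frob2 big1 // => i _; rewrite big1 // => j _; rewrite mxE expr0n.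
rewrite Ex_S.
have -> : \sum_(i < n) p i * Ex p c (fun S => frob2 (\sum_(t < c.+1) X (fcons i S t))) =
          \sum_(i < n) p i * (frob2 (X i) + c%:R * \sum_(j < n) p j * frob2 (X j)).
  apply: eq_bigr => i _; congr (_ * _).
  set Z := fun S : {ffun 'I_c -> 'I_n} => \sum_(t < c) X (S t).
  rewrite (@Ex_ext _ _ p _ _ (fun S => frob2 (X i) + (2 * ip (X i) (Z S) + frob2 (Z S)))); last first.
    by move=> S; rewrite sum_fcons frob2E ipDl !ipDr -!frob2E (ipC _ (X i)) /Z; ring.
  rewrite (Ex_add p (fun _ => frob2 (X i))) Ex_const //.
  rewrite (Ex_add p (fun S => 2 * ip (X i) (Z S))) (Ex_scale p 2 (fun S => ip (X i) (Z S))).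
  by rewrite /Z Ex_ip mulr0 add0r IH.
under eq_bigr do rewrite mulrDr.
rewrite big_split /= -mulr_suml p1 mul1r.
rewrite -addn1 natrD mulrDl mul1r addrC.
done.
Qed.

End Moment.

Section Basic.
Variable R : realType.

Lemma frob2Z a b x (M : 'M[R]_(a, b)) : frob2 (x *: M) = x ^+ 2 * frob2 M.
Proof. by rewrite !frob2E ipZl ipZr mulrA -expr2. Qed.

Lemma colnorm2_ge0 m n (A : 'M[R]_(m, n)) i : 0 <= colnorm2 A i.
Proof. by apply: sumr_ge0 => a _; apply: sqr_ge0. Qed.

Lemma frob2_col m n (A : 'M[R]_(m, n)) i : frob2 (col i A) = colnorm2 A i.
Proof. by apply: eq_bigr => a _; rewrite big_ord1 mxE. Qed.

Lemma frob2_vvt m n (A : 'M[R]_(m, n)) i :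
  frob2 (col i A *m (col i A)^T) = colnorm2 A i ^+ 2.
Proof.
rewrite /frob2 /colnorm2 expr2 mulr_suml; apply: eq_bigr => a _.
rewrite mulr_sumr; apply: eq_bigr => b _.
by rewrite mxE big_ord1 !mxE exprMn.
Qed.

Lemma sum_colnorm2 m n (A : 'M[R]_(m, n)) : \sum_i colnorm2 A i = frob2 A.
Proof. by rewrite /colnorm2 /frob2 exchange_big. Qed.

Lemma mulmx_tr_sum m n (A : 'M[R]_(m, n)) :
  A *m A^T = \sum_i col i A *m (col i A)^T.
Proof.
apply/matrixP => a b; rewrite mxE summxE; apply: eq_bigr => i _.
by rewrite !mxE big_ord1 !mxE.
Qed.

End Basic.

Section Model.
Variables (R : realType) (m n c : nat) (A : 'M[R]_(m, n)) (p : 'I_n -> R) (beta : R).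
Variable p0 : forall i, 0 <= p i.
Variable p1 : \sum_(i < n) p i = 1.
Variable hc : (0 < c)%N.
Variable hb : 0 < beta.
Variable hPhi : 0 < frob2 A.
Variable hp : forall i, beta * colnorm2 A i / frob2 A <= p i.

Let Phi := frob2 A.
Definition Tm i : 'M[R]_m := (c%:R * p i)^-1 *: (col i A *m (col i A)^T).
Let W := A *m A^T.
Definition fS (S : {ffun 'I_c -> 'I_n}) := nrm (A *m A^T - \sum_(t < c) Tm (S t)).

Lemma hc0 : 0 < c%:R :> R. Proof. by rewrite ltr0n. Qed.

Lemma hnb i : colnorm2 A i <= p i * Phi / beta.
Proof.
have := hp i; rewrite ler_pdivrMr // => h.
by rewrite ler_pdivlMr // mulrC.
Qed.

Lemma col_p0 i : p i = 0 -> col i A = 0.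
Proof.
move=> pi0; apply: frob2_eq0; rewrite frob2_col.
apply/eqP; rewrite eq_le colnorm2_ge0 andbT.
by have := hnb i; rewrite pi0 !mul0r.
Qed.

Lemma T_bound i : (c%:R * p i)^-1 * colnorm2 A i <= Phi / (beta * c%:R).
Proof.
have hc0 := hc0.
have [pi0|pin0] := eqVneq (p i) 0.
  by rewrite pi0 mulr0 invr0 mul0r; apply: divr_ge0; [apply: ltW|apply: mulr_ge0; apply: ltW].
have pp : 0 < p i by rewrite lt_def pin0 p0.
apply: le_trans (ler_wpM2l _ (hnb i)) _.
  by rewrite invr_ge0; apply: mulr_ge0; apply: ltW.
rewrite le_eqVlt; apply/orP; left; apply/eqP; field.
by apply/and3P; split; apply/lt0r_neq0.
Qed.

Lemma nrm_T i : nrm (Tm i) <= Phi / (beta * c%:R).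
Proof.
rewrite /nrm /Tm frob2Z frob2_vvt -exprMn sqrtr_sqr ger0_norm; first exact: T_bound.
apply: mulr_ge0; last exact: colnorm2_ge0.
by rewrite invr_ge0; apply: mulr_ge0; [apply: ltW; apply: hc0|].
Qed.

Lemma sum_upd (S : {ffun 'I_c -> 'I_n}) t i :
  \sum_(u < c) Tm (fupd S t i u) = \sum_(u < c) Tm (S u) - Tm (S t) + Tm i.
Proof.
rewrite (bigD1 t) //= [in RHS](bigD1 t) //= ffunE eqxx.
have -> : \sum_(u < c | u != t) Tm (fupd S t i u) = \sum_(u < c | u != t) Tm (S u).
  by apply: eq_bigr => u hu; rewrite ffunE (negbTE hu).
by rewrite [Tm (S t) + _]addrC addrK addrC.
Qed.

Lemma fS_bd S t i : `|fS S - fS (fupd S t i)| <= 2 * (Phi / (beta * c%:R)).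
Proof.
apply: le_trans (nrm_diff _ _) _.
rewrite sum_upd.
have -> : A *m A^T - \sum_(u < c) Tm (S u) - (A *m A^T - (\sum_(u < c) Tm (S u) - Tm (S t) + Tm i))
   = Tm i - Tm (S t) by apply/matrixP => a b; rewrite !mxE; ring.
apply: le_trans (nrm_triangle _ _) _; rewrite nrmN mulr2n mulrDl mul1r.
by apply: lerD; apply: nrm_T.
Qed.

Lemma sumT : \sum_(i < n) p i *: Tm i = c%:R^-1 *: W.
Proof.
rewrite /W mulmx_tr_sum scaler_sumr; apply: eq_bigr => i _.
have [pi0|pin0] := eqVneq (p i) 0.
  by rewrite /Tm col_p0 // !mul0mx !scaler0.
rewrite /Tm scalerA; congr (_ *: _).
by rewrite invfM mulrCA mulfV // mulr1.
Qed.

Lemma sum_X (S : {ffun 'I_c -> 'I_n}) :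
  \sum_(t < c) (c%:R^-1 *: W - Tm (S t)) = W - \sum_(t < c) Tm (S t).
Proof.
rewrite sumrB sumr_const card_ord scalerMnl -mulr_natr mulVf ?scale1r //.
exact: lt0r_neq0 hc0.
Qed.

Lemma X0 : \sum_(i < n) p i *: (c%:R^-1 *: W - Tm i) = 0.
Proof.
under eq_bigr do rewrite scalerBr.
by rewrite sumrB sumT -scaler_suml p1 scale1r subrr.
Qed.

Lemma var_le : \sum_(i < n) p i * frob2 (c%:R^-1 *: W - Tm i) <=
  \sum_(i < n) p i * frob2 (Tm i).
Proof.
set mu := c%:R^-1 *: W.
have e : forall i, p i * frob2 (mu - Tm i) =
   p i * frob2 mu - 2 * (p i * ip mu (Tm i)) + p i * frob2 (Tm i).
  by move=> i; rewrite !frob2E ipBl !ipBr (ipC (Tm i) mu); ring.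
under eq_bigr do rewrite e.
rewrite big_split sumrB /= -mulr_suml p1 mul1r -mulr_sumr.
have -> : \sum_(i < n) p i * ip mu (Tm i) = frob2 mu.
  transitivity (ip mu (\sum_(i < n) p i *: Tm i)); last by rewrite sumT frob2E.
  by rewrite ip_sumr; apply: eq_bigr => i _; rewrite ipZr.
have := frob2_ge0 mu; lra.
Qed.

Lemma second_bound : \sum_(i < n) p i * frob2 (Tm i) <= Phi ^+ 2 / (beta * c%:R ^+ 2).
Proof.
have hc0 := hc0.
have -> : Phi ^+ 2 / (beta * c%:R ^+ 2) = \sum_(i < n) colnorm2 A i * (Phi / (beta * c%:R ^+ 2)).
  by rewrite -mulr_suml sum_colnorm2 /Phi mulrA expr2.
apply: ler_sum => i _.
rewrite /Tm frob2Z frob2_vvt.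
have [pi0|pin0] := eqVneq (p i) 0.
  rewrite pi0 mul0r; apply: mulr_ge0; first exact: colnorm2_ge0.
  by apply: divr_ge0; [apply: ltW|apply: mulr_ge0; [apply: ltW|apply: sqr_ge0]].
have pp : 0 < p i by rewrite lt_def pin0 p0.
have hn := hnb i; have hn0 := colnorm2_ge0 A i.
have -> : p i * ((c%:R * p i)^-1 ^+ 2 * colnorm2 A i ^+ 2) =
   colnorm2 A i * (colnorm2 A i / p i / c%:R ^+ 2).
  field; apply/andP; split; apply/lt0r_neq0 => //.
apply: ler_wpM2l => //.
have h : colnorm2 A i / p i <= Phi / beta.
  rewrite ler_pdivrMr //; apply: le_trans hn _; rewrite le_eqVlt; apply/orP; left.
  by apply/eqP; field; apply/lt0r_neq0.
rewrite [in X in _ <= X]invfM [in X in _ <= X]mulrA; apply: ler_wpM2r => //.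
by rewrite invr_ge0; apply: sqr_ge0.
Qed.

End Model.

Section Tail.
Variables (R : realType) (n : nat) (p : 'I_n -> R).
Variable p0 : forall i, 0 <= p i.
Variable p1 : \sum_(i < n) p i = 1.

Lemma tail_bound c (f : {ffun 'I_c -> 'I_n} -> R) (d g l : R) :
  0 < d -> 0 < g -> (0 < c)%N ->
  (forall S t i, `|f S - f (fupd S t i)| <= d) ->
  4 * c%:R * d ^+ 2 * l <= g ^+ 2 ->
  Ex p c (fun S => ((Ex p c f + g < f S)%R)%:R) <= expR (- l).
Proof.
move=> d0 g0 c0 hf hl.
have cR : 0 < c%:R :> R by rewrite ltr0n.
have [gbig|gsmall] := ltrP (c%:R * d) g.
  have sd0 : 0 * d <= 1/2 by rewrite mul0r; lra.
  have [h1 _] := bd_ineq p0 p1 (lexx 0) (ltW d0) sd0 hf.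
  have -> : Ex p c (fun S => ((Ex p c f + g < f S)%R)%:R) = Ex p c (fun _ => 0).
    apply: Ex_ext => S; have [h|h] := ltrP (Ex p c f + g) (f S) => //.
    have := h1 S; rewrite ler_norml => /andP [_ h2]; lra.
  by rewrite Ex_const //; apply: expR_ge0.
set s := g / (2 * c%:R * d ^+ 2).
have s0 : 0 <= s by rewrite /s; apply: divr_ge0; [lra|]; apply: mulr_ge0; [lra|apply: sqr_ge0].
have sd : s * d <= 1/2.
  rewrite /s.
  have -> : g / (2 * c%:R * d ^+ 2) * d = g / (c%:R * d) / 2 by field; apply/andP; split; apply/lt0r_neq0.
  rewrite ler_pdivrMr // mul1r ler_pdivrMr ?mulr_gt0 //; lra.
have [_ h2] := bd_ineq p0 p1 s0 (ltW d0) sd hf.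
set Ef := Ex p c f.
apply: (@le_trans _ _ (Ex p c (fun S => expR (- (s * g)) * expR (s * (f S - Ef))))).
  apply: (Ex_le p0) => S; have [h|h] := ltrP (Ef + g) (f S).
    rewrite -expRD; apply: le_trans (expR_ge1Dx _); rewrite lerDl.
    have : 0 <= s * (f S - Ef - g) by apply: mulr_ge0 => //; lra.
    lra.
  by apply: mulr_ge0; apply: expR_ge0.
rewrite (Ex_scale p (expR (- (s * g))) (fun S => expR (s * (f S - Ef)))).
apply: le_trans (ler_wpM2l (expR_ge0 _) h2) _.
rewrite -expRD ler_expR.
have -> : - (s * g) + c%:R * (s ^+ 2 * d ^+ 2) = - (g ^+ 2 / (4 * c%:R * d ^+ 2)).
  by rewrite /s; field; apply/andP; split; apply/lt0r_neq0.
rewrite lerN2 ler_pdivlMr; first by rewrite mulrC.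
by apply: mulr_gt0; [lra|apply: exprn_gt0].
Qed.

End Tail.

Section Final.
Variables (R : realType) (m n c : nat) (A : 'M[R]_(m, n)) (p : 'I_n -> R) (beta : R).
Variable p0 : forall i, 0 <= p i.
Variable p1 : \sum_(i < n) p i = 1.

Lemma iid_Ex (E : {ffun 'I_c -> 'I_n} -> bool) :
  iid_prob p E = Ex p c (fun S => (E S)%:R).
Proof.
rewrite /iid_prob /Ex big_mkcond /=; apply: eq_bigr => S _.
by case: (E S); rewrite ?mulr1 ?mulr0.
Qed.

Lemma iid_compl (E : {ffun 'I_c -> 'I_n} -> bool) :
  iid_prob p E = 1 - Ex p c (fun S => (~~ E S)%:R).
Proof.
rewrite iid_Ex -[X in _ = X - _](Ex_const p1 c 1) -Ex_sub; apply: Ex_ext => S.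
by case: (E S) => /=; rewrite ?subr0 ?subrr.
Qed.

Lemma iid_mono (E1 E2 : {ffun 'I_c -> 'I_n} -> bool) :
  (forall S, E1 S -> E2 S) -> iid_prob p E1 <= iid_prob p E2.
Proof.
move=> H; rewrite !iid_Ex; apply: (Ex_le p0) => S.
by case: (boolP (E1 S)) => [/H ->//|_]; case: (E2 S).
Qed.

Lemma YYt (S : {ffun 'I_c -> 'I_n}) :
  let C := sampled_cols A S in
  let D := diag_mx (\row_(t < c) Num.sqrt ((c%:R * p (S t))^-1)) in
  (C *m D) *m (C *m D)^T = \sum_(t < c) Tm c A p (S t).
Proof.
move=> C D; rewrite /D mul_mx_diag; apply/matrixP => a b; rewrite summxE !mxE.
apply: eq_bigr => t _; rewrite /Tm !mxE big_ord1 !mxE /C.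
have w0 : 0 <= (c%:R * p (S t))^-1 by rewrite invr_ge0; apply: mulr_ge0.
have := sqr_sqrtr w0; rewrite expr2 => hw.
by rewrite mulrACA hw mulrC.
Qed.

Variable hc : (0 < c)%N.
Variable hb : 0 < beta.
Variable hPhi : 0 < frob2 A.
Variable hp : forall i, beta * colnorm2 A i / frob2 A <= p i.

Lemma Ef_sq : Ex p c (fun S => fS A p S ^+ 2) <= frob2 A ^+ 2 / (beta * c%:R).
Proof.
have cR : 0 < c%:R :> R by rewrite ltr0n.
rewrite (@Ex_ext _ _ p c _ (fun S => frob2 (\sum_(t < c) (c%:R^-1 *: (A *m A^T) - Tm c A p (S t))))); last first.
  by move=> S; rewrite /fS nrm_sq sum_X.
rewrite (Ex_frob2 p1 (X0 c p1 hb hPhi hp)).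
apply: le_trans (ler_wpM2l (ler0n _ c) (le_trans (var_le c p1 hb hPhi hp) (second_bound p0 hc hb hPhi hp))) _.
rewrite le_eqVlt; apply/orP; left; apply/eqP; field.
by apply/andP; split; apply/lt0r_neq0.
Qed.

Lemma Ef_le : Ex p c (fS A p) <= Num.sqrt (frob2 A ^+ 2 / (beta * c%:R)).
Proof.
set e := Ex p c (fS A p).
have h : 0 <= Ex p c (fun S => (fS A p S - e) ^+ 2).
  by apply: (Ex_ge0 p0 p1) => S; apply: sqr_ge0.
rewrite (@Ex_ext _ _ p c _ (fun S => fS A p S ^+ 2 + ((-2 * e) * fS A p S + e ^+ 2))) in h; last first.
  by move=> S; ring.
rewrite Ex_add (Ex_add p (fun S => (-2 * e) * fS A p S)) (Ex_scale p (-2 * e) (fS A p)) Ex_const // in h.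
have h2 : e ^+ 2 <= frob2 A ^+ 2 / (beta * c%:R).
  apply: le_trans Ef_sq; rewrite -/e in h; lra.
apply: le_trans (ler_norm e) _.
by rewrite -sqrtr_sqr ler_sqrt // divr_ge0 ?sqr_ge0 // mulr_ge0 ?ler0n // ltW.
Qed.

End Final.

Unset Implicit Arguments.

Theorem mainTheorem13 (R : realType) (m n : nat) (A : 'M[R]_(m, n))
  (k c : nat) (eps beta delta : R) (p : 'I_n -> R) (Ak : 'M[R]_(m, n)) :
  (0 < k)%N -> 0 < eps ->
  (1 <= c <= n)%N ->
  0 < beta -> beta <= 1 ->
  (forall i, 0 <= p i) -> \sum_(i < n) p i = 1 ->
  (forall i, beta * colnorm2 A i / frob2 A <= p i) ->
  0 < delta -> delta < 1 ->
  best_rank_approx k A Ak ->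
  let eta := 1 + Num.sqrt ((8 / beta) * ln (1 / delta)) in
  4 * eta ^+ 2 * k%:R / (beta * eps ^+ 2) <= c%:R ->
  1 - delta <=
    iid_prob p (fun S : {ffun 'I_c -> 'I_n} =>
      let C := sampled_cols A S in
      frob2 (A - C *m mpinv C *m A) <= frob2 (A - Ak) + eps * frob2 A).
Proof.
move=> hk he /andP [hc _] hb _ p0 p1 hp hd0 hd1 [hrk _] eta hcE.
have [Phi0|PhiN0] := eqVneq (frob2 A) 0.
  have A0 := frob2_eq0 Phi0.
  apply: le_trans (_ : iid_prob p (fun _ => true) <= _).
    by rewrite iid_Ex Ex_const // (_ : (true%:R : R) = 1) //; lra.
  apply: iid_mono => // S _ /=.
  rewrite Phi0 A0 !mulmx0 subr0 mulr0 addr0.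
  have -> : frob2 (0 : 'M[R]_(m, n)) = 0 by rewrite /frob2 big1 // => i _; rewrite big1 // => j _; rewrite mxE expr0n.
  exact: frob2_ge0.
have hPhi : 0 < frob2 A by rewrite lt_def PhiN0 frob2_ge0.
set Phi := frob2 A.
have cR : 0 < c%:R :> R by rewrite ltr0n.
have kR : 0 < k%:R :> R by rewrite ltr0n.
set l := ln (1 / delta).
have hl : 0 < l by rewrite /l ln_gt0 // ltr_pdivlMr // mul1r.
set q := Num.sqrt (8 / beta * l).
have q8 : 0 < 8 / beta * l by apply: mulr_gt0 => //; apply: divr_gt0.
have hq : 0 < q by rewrite /q sqrtr_gt0.
have hq2 : q ^+ 2 = 8 / beta * l by rewrite /q sqr_sqrtr // ltW.
have etaE : eta = 1 + q by [].
set mu := Num.sqrt (Phi ^+ 2 / (beta * c%:R)).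
have mu0 : 0 < Phi ^+ 2 / (beta * c%:R) by apply: divr_gt0; [apply: exprn_gt0|apply: mulr_gt0].
have hmu : 0 < mu by rewrite /mu sqrtr_gt0.
have hmu2 : mu ^+ 2 = Phi ^+ 2 / (beta * c%:R) by rewrite /mu sqr_sqrtr // ltW.
set sk := Num.sqrt (2 * k%:R : R).
have sk0 : 0 < sk by rewrite /sk sqrtr_gt0 mulr_gt0.
have hsk2 : sk ^+ 2 = 2 * k%:R by rewrite /sk sqr_sqrtr // ltW // mulr_gt0.
set r2 := Num.sqrt (2 : R).
have r20 : 0 <= r2 by apply: sqrtr_ge0.
have hr2 : r2 ^+ 2 = 2 by rewrite /r2 sqr_sqrtr.
have r21 : 1 <= r2 by rewrite /r2 -[X in X <= _]sqrtr1 ler_sqrt //; lra.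
set tau := eps * Phi / sk.
have htau : r2 * eta * mu <= tau.
  have t0 : 0 <= tau by apply: divr_ge0; [apply: mulr_ge0; apply: ltW|apply: ltW].
  rewrite -(ler_pXn2r (_ : (0 < 2)%N)) ?nnegrE //; last first.
    by apply: mulr_ge0; [apply: mulr_ge0 => //; rewrite etaE; lra|apply: ltW].
  have key : 4 * eta ^+ 2 * k%:R <= c%:R * (beta * eps ^+ 2).
    by rewrite -ler_pdivrMr // mulr_gt0 // exprn_gt0.
  have tau2 : tau ^+ 2 = eps ^+ 2 * Phi ^+ 2 / (2 * k%:R) by rewrite /tau expr_div_n exprMn hsk2.
  rewrite tau2 !exprMn hr2 hmu2.
  rewrite -subr_ge0.
  have -> : eps ^+ 2 * Phi ^+ 2 / (2 * k%:R) - 2 * eta ^+ 2 * (Phi ^+ 2 / (beta * c%:R)) =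
      (c%:R * (beta * eps ^+ 2) - 4 * eta ^+ 2 * k%:R) * (Phi ^+ 2 / (2 * k%:R * beta * c%:R)).
    by field; apply/and3P; split; apply/lt0r_neq0.
  apply: mulr_ge0; first lra.
  by apply: divr_ge0; [apply: sqr_ge0|]; apply: mulr_ge0; [apply: mulr_ge0 => //; lra|apply: ltW].
have hEf : Ex p c (fS A p) <= mu := Ef_le p0 p1 hc hb hPhi hp.
set Ef := Ex p c (fS A p) in hEf.
set g := tau - Ef.
have hg : r2 * q * mu <= g.
  have h1 : 0 <= (r2 - 1) * mu by apply: mulr_ge0; [rewrite subr_ge0|apply: ltW].
  have e : r2 * eta * mu = r2 * mu + r2 * q * mu by rewrite etaE; ring.
  rewrite /g; lra.
have hg0 : 0 < r2 * q * mu by apply: mulr_gt0 => //; apply: mulr_gt0 => //; lra.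
have g0 : 0 < g by lra.
set d := 2 * (Phi / (beta * c%:R)).
have d0 : 0 < d by apply: mulr_gt0 => //; apply: divr_gt0 => //; apply: mulr_gt0.
have hl4 : 4 * c%:R * d ^+ 2 * l <= g ^+ 2.
  have -> : 4 * c%:R * d ^+ 2 * l = (r2 * q * mu) ^+ 2.
    rewrite !exprMn hr2 hq2 hmu2 /d; field.
    by apply/andP; split; apply/lt0r_neq0.
  by apply: lerXn2r; rewrite ?nnegrE ?(ltW hg0) ?(ltW g0).
have tail := tail_bound p0 p1 d0 g0 hc (fS_bd p0 hc hb hPhi hp) hl4.
have hexp : expR (- l) = delta.
  rewrite expRN /l lnK ?invf_div ?divr1 //.
  by rewrite posrE divr_gt0.
rewrite hexp -/Ef (_ : Ef + g = tau) in tail; last by rewrite /g addrC subrK.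
apply: le_trans (_ : iid_prob p (fun S : {ffun 'I_c -> 'I_n} => fS A p S <= tau) <= _).
  rewrite iid_compl //.
  rewrite (@Ex_ext _ _ p c _ (fun S => ((tau < fS A p S)%R)%:R)); first lra.
  by move=> S; rewrite -ltNge.
apply: iid_mono => // S hS /=.
have := det_bound A (sampled_cols A S) (diag_mx (\row_(t < c) Num.sqrt ((c%:R * p (S t))^-1))) hrk.
rewrite YYt // -/sk => h.
apply: le_trans h _; rewrite lerD2l.
have -> : eps * Phi = sk * tau by rewrite /tau [RHS]mulrC divfK //; apply: lt0r_neq0.
by apply: ler_wpM2l; [apply: ltW|].
Qed.
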